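(* Let $\mathbb{F}$ be an infinite field with $\operatorname{char}(\mathbb{F})\neq 2$ and let $G$ be a non-abelian group with a group involution $\ast$ and a non-trivial orientation $\sigma:G\to\{\pm1\}$ such that $gg^\ast\in N=\ker\sigma$ for all $g\in G$. Suppose $\mathbb{F}G$ is normal with respect to the oriented involution $\circledast$ and that $N$, with the restriction of $\ast$, is an SLC-group with unique non-identity commutator $s$. Then $G$ is an LC-group and $\ast$ is given by $g^\ast=g$ if $g\in N\cap\zeta(G)$ or $g\in(G\setminus N)\setminus\zeta(G)$, and $g^\ast=sg$ otherwise.
   Context: A group involution on $G$ is a map $\ast:G\to G$ with $(gh)^\ast=h^\ast g^\ast$ and $(g^\ast)^\ast=g$. An orientation is a group homomorphism $\sigma:G\to\{\pm1\}$. The oriented involution is $(\sum_g\alpha_g g)^\circledast=\sum_g\alpha_g\sigma(g)g^\ast$ on $\mathbb{F}G$. $\mathbb{F}G$ is normal if $\alpha\alpha^\circledast=\alpha^\circledast\alpha$ for all $\alpha\in\mathbb{F}G$. $\zeta(G)$ is the center of $G$, $(g,h)=g^{-1}h^{-1}gh$. A group $H$ is an LC-group if it is non-abelian and for all $g,h\in H$: $gh=hg$ iff at least one of $g,h,gh$ is in $\zeta(H)$. $H$ with involution $\ast$ is an SLC-group if it is an LC-group with a unique non-identity commutator $s$ (i.e. $\{(g,h):g,h\in H\}=\{1,s\}$) and $h^\ast=h$ for $h\in\zeta(H)$, $h^\ast=sh$ for $h\notin\zeta(H)$. *)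

(* Defs.v *)
From HB Require Import structures.
From mathcomp Require Import all_boot all_algebra.
Set Implicit Arguments. Unset Strict Implicit. Unset Printing Implicit Defensive.
Import GRing.Theory.

Section Defs.
Variable G : groupType.

Definition is_group_involution (star : G -> G) : Prop :=
  (forall g h : G, star (g * h)%g = (star h * star g)%g) /\ involutive star.

Definition is_orientation (sigma : G -> int) : Prop :=
  (forall g, sigma g = 1%R \/ sigma g = (-1)%R) /\
  (forall g h, sigma (g * h)%g = (sigma g * sigma h)%R).

Definition kerO (sigma : G -> int) : G -> Prop := fun g => sigma g = 1%R.

Definition in_center (H : G -> Prop) (h : G) : Prop :=
  H h /\ forall k, H k -> (h * k = k * h)%g.

Definition is_LC (H : G -> Prop) : Prop :=
  (exists g h, H g /\ H h /\ (g * h <> h * g)%g) /\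
  (forall g h, H g -> H h ->
     ((g * h = h * g)%g <->
      (in_center H g \/ in_center H h \/ in_center H (g * h)%g))).

Definition is_SLC (H : G -> Prop) (star : G -> G) (s : G) : Prop :=
  is_LC H /\ s <> 1%g /\
  (forall g h, H g -> H h -> [~ g, h]%g = 1%g \/ [~ g, h]%g = s) /\
  (exists g h, H g /\ H h /\ [~ g, h]%g = 1%g) /\
  (exists g h, H g /\ H h /\ [~ g, h]%g = s) /\
  (forall h, H h -> in_center H h -> star h = h) /\
  (forall h, H h -> ~ in_center H h -> star h = (s * h)%g).

Variable F : fieldType.

(* Group algebra FG: an element is a formal finite sum \sum a_i g_i,
   represented by a list of pairs (a_i, g_i); two such lists represent
   the same element of FG iff they have the same coefficient function. *)
Definition ga_coef (a : seq (F * G)) (x : G) : F :=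
  (\sum_(p <- a | p.2 == x) p.1)%R.

Definition ga_mul (a b : seq (F * G)) : seq (F * G) :=
  [seq ((p.1 * q.1)%R, (p.2 * q.2)%g) | p <- a, q <- b].

Definition ga_oinv (sigma : G -> int) (star : G -> G) (a : seq (F * G)) :=
  [seq (((sigma p.2)%:~R * p.1)%R, star p.2) | p <- a].

Definition ga_normal (sigma : G -> int) (star : G -> G) : Prop :=
  forall a : seq (F * G),
    ga_coef (ga_mul a (ga_oinv sigma star a)) =1
    ga_coef (ga_mul (ga_oinv sigma star a) a).

End Defs.

Definition infinite_field (F : fieldType) : Prop :=
  forall s : seq F, exists x : F, x \notin s.

(* Main.v *)
Require Import Defs.
From HB Require Import structures.
From mathcomp Require Import all_boot all_algebra.
From mathcomp Require Import ring.
Set Implicit Arguments. Unset Strict Implicit. Unset Printing Implicit Defensive.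
Import GRing.Theory.
Local Open Scope ring_scope.

Lemma two_neq0 (F : fieldType) : (2 \notin [pchar F])%R -> (2%:R : F) != 0%R.
Proof. move=> H; apply: contra H => /eqP h. by rewrite inE /= h eqxx. Qed.

Lemma pair_nat (T : eqType) (a b c d : T) :
  (forall x, (a == x) + (b == x) = (c == x) + (d == x))%N ->
  (a = c /\ b = d) \/ (a = d /\ b = c).
Proof.
move=> H; have Ha := H a; have Hb := H b.
rewrite eqxx in Ha; rewrite eqxx in Hb.
case: (eqVneq c a) => ca.
  subst c; left; split => //.
  move/eqP: Hb; rewrite eqn_add2l.
  by case: (eqVneq d b).
case: (eqVneq d a) => da; last first.
  by move: Ha; rewrite (negbTE ca) (negbTE da).
subst d; right; split => //.
move: Ha; rewrite (negbTE ca) eqxx /= => /eqP; rewrite eqSS => /eqP ba.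
move: Hb; rewrite eq_sym ba /=. by case: (eqVneq c b).
Qed.

Lemma natr_inj2 (F : fieldType) (m n : nat) : (2%:R : F) != 0%R ->
  (m <= 2)%N -> (n <= 2)%N -> (m%:R = n%:R :> F)%R -> m = n.
Proof.
move=> h2 hm hn.
have h1 : (1%:R : F) != 0%R by rewrite oner_eq0.
have h21 : (2%:R : F) != 1%:R.
  apply/eqP => h; move/eqP: h1; apply.
  by have := congr1 (fun x => x - 1%:R) h; rewrite subrr -natrB.
case: m hm => [|[|[|m]]] // _; case: n hn => [|[|[|n]]] // _ /eqP;
 rewrite ?(eq_sym 0%R) ?(eq_sym _ 1%:R) ?(negbTE h1) ?(negbTE h2) ?(negbTE h21) //.
all: by rewrite eq_sym (negbTE h21).
Qed.

Definition peq (G : groupType) (a b c d : G) := (a = c /\ b = d) \/ (a = d /\ b = c).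

Lemma coef_cons (F : fieldType) (G : groupType) (c : F) (y : G) l x :
  ga_coef ((c, y) :: l) x = (y == x)%:R * c + ga_coef l x.
Proof. by rewrite /ga_coef big_cons /=; case: eqP => _; rewrite ?mul1r ?mul0r ?add0r. Qed.

Lemma coef_nil (F : fieldType) (G : groupType) (x : G) : ga_coef (F:=F) [::] x = 0.
Proof. by rewrite /ga_coef big_nil. Qed.

Lemma normal_facts (F : fieldType) (G : groupType) (sigma : G -> int) (star : G -> G) :
  (2 \notin [pchar F]) -> is_orientation sigma -> ga_normal F sigma star ->
  (forall g, g * star g = star g * g)%g /\
  (forall g h, sigma g = sigma h ->
     peq (g * star h)%g (h * star g)%g (star g * h)%g (star h * g)%g) /\
  (forall g h, sigma g = 1 -> sigma h = -1 ->
     peq (h * star g)%g (star h * g)%g (star g * h)%g (g * star h)%g).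
Proof.
move=> Hc [Hs _] Hn.
have h2 := two_neq0 Hc.
have eN0 : forall g, (sigma g)%:~R != 0 :> F.
  by move=> g; case: (Hs g) => ->; rewrite ?rmorph1 ?rmorphN1 ?oppr_eq0 oner_eq0.
have E0 : forall g, (g * star g = star g * g)%g.
  move=> g; have := Hn [:: (1, g)] (g * star g)%g.
  rewrite /ga_mul /ga_oinv /= !coef_cons !coef_nil eqxx !mulr1 !mul1r !addr0.
  case: eqP => // _; rewrite mul0r => /eqP; by rewrite (negbTE (eN0 g)).
have key : forall g h x,
  (sigma h)%:~R * (g * star h == x)%g%:R + (sigma g)%:~R * (h * star g == x)%g%:R
  = (sigma g)%:~R * (star g * h == x)%g%:R + (sigma h)%:~R * (star h * g == x)%g%:R :> F.
  move=> g h x; have := Hn [:: (1, g); (1, h)] x.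
  rewrite /ga_mul /ga_oinv /= !coef_cons !coef_nil !mulr1 !mul1r !addr0 !E0.
  move/eqP; rewrite -subr_eq0 => /eqP H.
  apply/eqP; rewrite -subr_eq0; apply/eqP; rewrite -H; ring.
have pn : forall a b c d : G, (forall x, ((a == x)%:R + (b == x)%:R = (c == x)%:R + (d == x)%:R :> F)) -> peq a b c d.
  move=> a b c d H; apply: pair_nat => x; apply: (natr_inj2 h2).
  - by rewrite -[2%N]/(1+1)%N leq_add ?leq_b1.
  - by rewrite -[2%N]/(1+1)%N leq_add ?leq_b1.
  - by rewrite !natrD.
split => //; split.
  move=> g h e; apply: pn => x; have := key g h x; rewrite e.
  case: (Hs h) => ->; rewrite ?rmorph1 ?rmorphN1 ?mul1r ?mulN1r //.
  by rewrite -!opprD => /oppr_inj.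
move=> g h eg eh; apply: pn => x; have := key g h x; rewrite eg eh rmorph1 rmorphN1 !mul1r !mulN1r.
move/eqP; rewrite -subr_eq0 => /eqP H.
apply/eqP; rewrite -subr_eq0; apply/eqP; rewrite -H; ring.
Qed.

From Stdlib Require Import Classical.

Local Close Scope ring_scope.

Theorem proposition1 (F : fieldType) (G : groupType)
  (star : G -> G) (sigma : G -> int) (s : G) :
  infinite_field F ->
  (2 \notin [pchar F])%R ->
  (exists g h : G, (g * h <> h * g)%g) ->
  is_group_involution star ->
  is_orientation sigma ->
  (exists g : G, sigma g = (-1)%R) ->
  (forall g : G, kerO sigma (g * star g)%g) ->
  ga_normal F sigma star ->
  is_SLC (kerO sigma) star s ->
  is_LC (fun _ : G => True) /\
  (forall g : G,
     let Z := in_center (fun _ : G => True) g in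
     let N := kerO sigma g in
     ((N /\ Z) \/ (~ N /\ ~ Z) -> star g = g) /\
     (~ ((N /\ Z) \/ (~ N /\ ~ Z)) -> star g = (s * g)%g)).
Proof.
move=> _ Hc Hnab [Hmul Hinv] [Hs Hm] _ _ Hn.
move=> [[[g0 [h0 [Ng0 [Nh0 Hgh0]]]] HLC] [s1 [Hcomm [_ [[ga [hb [Nga [Nhb Hs_]]]] [Hz Hnz]]]]]].
have [E0 [HA HB]] := normal_facts Hc (conj Hs Hm) Hn.
Local Open Scope group_scope.
pose N := kerO sigma.
have notN : forall g, ~ N g -> sigma g = (-1)%R.
  by move=> g; rewrite /N /kerO; case: (Hs g).
have sig1 : sigma 1 = 1%R.
  have := Hm 1 1; rewrite mulg1; case: (Hs 1) => -> //.
have sigV : forall g, sigma g^-1 = sigma g.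
  move=> g; have := Hm g g^-1; rewrite mulgV sig1.
  by case: (Hs g) => ->; case: (Hs g^-1) => ->.
have sN : N s.
  by rewrite /N /kerO -Hs_ /commg /conjg !Hm !sigV Nga Nhb.
have sC : forall k, s * k = k * s.
  move=> k.
  have Nk : forall g, N g -> N (g ^ k).
    move=> g Ng; rewrite /N /kerO /conjg !Hm sigV Ng.
    by case: (Hs k) => ->.
  case: (Hcomm _ _ (Nk _ Nga) (Nk _ Nhb)); rewrite -conjRg Hs_.
    by move/eqP; rewrite conjg_eq1 => /eqP.
  by move=> e; rewrite conjgC e.
have s2 : s * s = 1.
  case: (Hcomm _ _ Nhb Nga); rewrite -invgR Hs_.
    by move/eqP; rewrite invg_eq1 => /eqP.
  by move=> e; rewrite -{2}e mulgV.
have scancel : forall x, s * x = x -> False.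
  by move=> x e; apply: s1; apply: (mulIg x); rewrite mul1g.
have ss : forall x, s * (s * x) = x by move=> x; rewrite mulgA s2 mul1g.
have NM : forall g h, sigma (g * h) = (sigma g * sigma h)%R := Hm.
have Zcent : forall z, in_center N z -> forall k, z * k = k * z.
  move=> z [Nz Zz] k.
  case: (classic (N k)) => Nk; first exact: Zz.
  have Nkz : sigma k = sigma (k * z) by rewrite Hm Nz GRing.mulr1.
  have := HA k (k * z) Nkz; rewrite Hmul (Hz z Nz (conj Nz Zz)).
  case => [[_ e]|[e _]].
    apply/esym/(mulIg (star k)); rewrite e -!mulgA; congr (_ * _).
    by rewrite E0.
  apply/esym/(mulIg (star k)); rewrite -mulgA e -!mulgA; congr (_ * _).
  by rewrite E0.
have noncentral : forall h, ~ N h -> (exists k, h * k <> k * h) -> star h = h.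
  move=> h Nh [k Hk].
  have [m [Nm Hhm]] : exists m, N m /\ h * m <> m * h.
    case: (classic (N k)) => Nk; first by exists k.
    exists (h^-1 * k); split.
      by rewrite /N /kerO Hm sigV (notN _ Nh) (notN _ Nk).
    move=> e; apply: Hk.
    by rewrite mulVKg in e; rewrite {1}e -!mulgA mulVKg.
  have nZm : ~ in_center N m by move=> Zm; apply: Hhm; rewrite (Zcent m Zm).
  have sm : star m = s * m by apply: Hnz.
  have Nhm : sigma h = sigma (h * m) by rewrite Hm Nm GRing.mulr1.
  have hm : h * m = s * m * h.
    have := HA h (h * m) Nhm; rewrite Hmul sm.
    case => [[_ e]|[e _]].
      apply: (mulIg (star h)); rewrite e -!mulgA; congr (_ * (_ * _)).
      by rewrite E0.
    exfalso; apply: Hhm; apply: (mulgI s); apply: (mulIg (star h)).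
    transitivity (h * (s * m * star h)); first by rewrite !mulgA (sC h).
    by rewrite e -!mulgA E0.
  have := HB m h Nm (notN _ Nh); rewrite sm.
  case => [[e _]|[e _]].
    exfalso; apply: Hhm; apply: (mulgI s).
    by rewrite mulgA (sC h) -mulgA e mulgA.
  apply: (mulgI m); rewrite -e.
  by rewrite mulgA -(sC h) -mulgA hm -!mulgA ss.
have central : forall h, ~ N h -> (forall k, h * k = k * h) -> star h = s * h.
  move=> h Nh Zh.
  have nZg0 : ~ in_center N g0 by move=> [_ Z0]; apply: Hgh0; apply: Z0.
  have sg0 : star g0 = s * g0 by apply: Hnz.
  have Nhg : ~ N (h * g0).
    by rewrite /N /kerO Hm Ng0 (notN _ Nh).
  have st : star (h * g0) = h * g0.
    apply: noncentral => //; exists h0 => e; apply: Hgh0.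
    by apply: (mulgI h); rewrite mulgA e mulgA -Zh -mulgA.
  move: st; rewrite Hmul sg0 (Zh g0) => e.
  rewrite -mulgA in e; apply: (mulgI g0).
  by rewrite -[g0 * star h]ss e mulgA (sC g0) mulgA.
pose Zt (g : G) := forall k : G, g * k = k * g.
have ZT : forall g, in_center (fun _ => True) g <-> Zt g.
  move=> g; split; first by case=> _ H k; exact: H.
  by move=> H; split=> // k _; exact: H.
have ZN : forall n, N n -> (in_center N n <-> Zt n).
  move=> n Nn; split; first exact: Zcent.
  by move=> H; split=> // k _; exact: H.
have formula : forall g,
   (((N g /\ Zt g) \/ (~ N g /\ ~ Zt g)) -> star g = g) /\
   (~ ((N g /\ Zt g) \/ (~ N g /\ ~ Zt g)) -> star g = s * g).
  move=> g; case: (classic (N g)) => Ng; case: (classic (Zt g)) => Zg.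
  - split=> [_|]; last tauto.
    by apply: Hz => //; apply/(ZN g Ng).
  - split=> [|_]; first tauto.
    by apply: Hnz => // /(ZN g Ng).
  - split=> [|_]; first tauto.
    exact: central.
  - split=> [_|]; last tauto.
    apply: noncentral => //.
    by apply: not_all_ex_not.
have Snc : forall x, ~ Zt x -> (N x -> star x = s * x) /\ (~ N x -> star x = x).
  move=> x Zx; have [f1 f2] := formula x; split=> Nx.
    by apply: f2; tauto.
  by apply: f1; tauto.
have sM : forall x y, x * (s * y) = s * (x * y).
  by move=> x y; rewrite mulgA -(sC x) -mulgA.
split.
  split.
    by case: Hnab => g [h e]; exists g, h.
  move=> g h _ _; rewrite !ZT; split; last first.
    case=> [Zg|[Zh|Zgh]].
    - exact: Zg.
    - by rewrite (Zh g).
    - by apply: (mulgI g); rewrite -(Zgh g) -mulgA.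
  move=> e; apply: NNPP => HH.
  have nZg : ~ Zt g by tauto.
  have nZh : ~ Zt h by tauto.
  have nZgh : ~ Zt (g * h) by tauto.
  have eq := Hmul g h.
  case: (classic (N g)) => Ng; case: (classic (N h)) => Nh.
  - have Ngh : N (g * h) by rewrite /N /kerO Hm Ng Nh.
    rewrite ((Snc _ nZgh).1 Ngh) ((Snc _ nZg).1 Ng) ((Snc _ nZh).1 Nh) in eq.
    rewrite -mulgA sM ss in eq.
    by apply: (scancel (g * h)); rewrite eq e.
  - have Ngh : ~ N (g * h) by rewrite /N /kerO Hm Ng (notN _ Nh).
    rewrite ((Snc _ nZgh).2 Ngh) ((Snc _ nZg).1 Ng) ((Snc _ nZh).2 Nh) in eq.
    rewrite sM in eq.
    by apply: (scancel (g * h)); rewrite {2}eq e.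
  - have Ngh : ~ N (g * h) by rewrite /N /kerO Hm Nh (notN _ Ng).
    rewrite ((Snc _ nZgh).2 Ngh) ((Snc _ nZg).2 Ng) ((Snc _ nZh).1 Nh) in eq.
    rewrite -mulgA in eq.
    by apply: (scancel (g * h)); rewrite {2}eq e.
  - have Ngh : N (g * h) by rewrite /N /kerO Hm (notN _ Nh) (notN _ Ng).
    rewrite ((Snc _ nZgh).1 Ngh) ((Snc _ nZg).2 Ng) ((Snc _ nZh).2 Nh) in eq.
    by apply: (scancel (g * h)); rewrite eq e.
move=> g Z0 N0; rewrite /Z0 /N0 ZT.
exact: formula.
Qed.
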